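(* Let $a_c>b_c>0$, $k_e>0$, $a_e^2=a_c^2+k_e$, $b_e^2=b_c^2+k_e$, let $c$ be the ellipse $x^2/a_c^2+y^2/b_c^2=1$, $e$ the confocal ellipse $x^2/a_e^2+y^2/b_e^2=1$, and $O$ the origin. Let $P_1P_2$ be a chord of $e$ whose line $\ell=[P_1,P_2]$ is tangent to $c$ at the point $Q_1$, and let $R_1$ be the pole of $\ell$ with respect to $e$. Then the signed distances of $O$ and of $R_1$ from the line $\ell$ (measured with respect to one and the same unit normal of $\ell$) have product $-k_e$. Moreover, the lines $[P_1,P_2]$ and $[Q_1,R_1]$ are orthogonal. *)

(* Defs.v *)
From mathcomp Require Import all_boot all_order all_algebra.
Set Implicit Arguments. Unset Strict Implicit. Unset Printing Implicit Defensive.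
Import Order.TTheory GRing.Theory Num.Theory.
Local Open Scope ring_scope.

Section Defs.
Variable R : realFieldType.

Definition dot (u v : R * R) : R := u.1 * v.1 + u.2 * v.2.
Definition vsub (u v : R * R) : R * R := (u.1 - v.1, u.2 - v.2).

Definition on_ellipse (a b : R) (X : R * R) : Prop :=
  X.1 ^+ 2 / a ^+ 2 + X.2 ^+ 2 / b ^+ 2 = 1.

Definition on_line (P1 P2 X : R * R) : Prop :=
  exists t : R, X = (P1.1 + t * (P2.1 - P1.1), P1.2 + t * (P2.2 - P1.2)).

Definition tangent_at (a b : R) (P1 P2 Q : R * R) : Prop :=
  [/\ on_ellipse a b Q, on_line P1 P2 Q &
      forall X, on_ellipse a b X -> on_line P1 P2 X -> X = Q].

Definition on_polar (a b : R) (Rp X : R * R) : Prop :=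
  Rp.1 * X.1 / a ^+ 2 + Rp.2 * X.2 / b ^+ 2 = 1.

Definition is_pole (a b : R) (P1 P2 Rp : R * R) : Prop :=
  forall X, on_polar a b Rp X <-> on_line P1 P2 X.

Definition unit_normal (P1 P2 n : R * R) : Prop :=
  dot n n = 1 /\ dot n (vsub P2 P1) = 0.

Definition signed_dist (P1 n X : R * R) : R := dot n (vsub X P1).

End Defs.

(* Main.v *)
Require Import Defs.
From mathcomp Require Import all_boot all_order all_algebra.
From mathcomp Require Import ring lra.
Import Order.TTheory GRing.Theory Num.Theory.
Local Open Scope ring_scope.

Lemma zero_of2 (R : realFieldType) (a d1 d2 : R) :
  (d1 != 0) || (d2 != 0) -> a * d1 = 0 -> a * d2 = 0 -> a = 0.
Proof.
case/orP=> hd h1 h2.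
- by move/eqP: h1; rewrite mulf_eq0 (negbTE hd) orbF => /eqP.
- by move/eqP: h2; rewrite mulf_eq0 (negbTE hd) orbF => /eqP.
Qed.

Arguments zero_of2 {R a d1 d2}.

Theorem lemma2p4 (R : realFieldType) (ac bc ke ae be : R)
  (P1 P2 Q1 R1 : R * R) :
  0 < bc -> bc < ac -> 0 < ke ->
  ae ^+ 2 = ac ^+ 2 + ke -> be ^+ 2 = bc ^+ 2 + ke ->
  P1 <> P2 -> on_ellipse ae be P1 -> on_ellipse ae be P2 ->
  tangent_at ac bc P1 P2 Q1 ->
  is_pole ae be P1 P2 R1 ->
  (forall n : R * R, unit_normal P1 P2 n ->
     signed_dist P1 n (0, 0) * signed_dist P1 n R1 = - ke)
  /\ (Q1 <> R1 /\ dot (vsub P2 P1) (vsub R1 Q1) = 0).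
Proof.
move=> hbc hab hke hae hbe hP12 _ _ [hQc hQl huniq] hpole.
have hac : 0 < ac by lra.
have ac2 : ac ^+ 2 != 0 by rewrite expf_neq0 // gt_eqF.
have bc2 : bc ^+ 2 != 0 by rewrite expf_neq0 // gt_eqF.
have ae2 : ae ^+ 2 != 0.
  rewrite hae gt_eqF // ltr_wpDl ?ltW // exprn_gt0 //.
have be2 : be ^+ 2 != 0.
  rewrite hbe gt_eqF // ltr_wpDl ?ltW // exprn_gt0 //.
case: P1 P2 Q1 R1 hP12 hQc hQl huniq hpole => [x1 y1] [x2 y2] [q1 q2] [r1 r2]
  hP12 hQc hQl huniq hpole.
rewrite /on_ellipse /= in hQc.
set p1 := r1 / ae ^+ 2; set p2 := r2 / be ^+ 2.
have hpX : forall X, on_line (x1, y1) (x2, y2) X -> p1 * X.1 + p2 * X.2 = 1.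
  move=> X /hpole; rewrite /on_polar /p1 /p2 /= => <-; ring.
have hp1 : p1 * x1 + p2 * y1 = 1.
  by apply: (hpX (x1, y1)); exists 0; congr pair => /=; ring.
have hp2 : p1 * x2 + p2 * y2 = 1.
  by apply: (hpX (x2, y2)); exists 1; congr pair => /=; ring.
have hpQ : p1 * q1 + p2 * q2 = 1 by apply: (hpX (q1, q2)).
set d1 := x2 - x1; set d2 := y2 - y1.
have hpd : p1 * d1 + p2 * d2 = 0.
  have -> : p1 * d1 + p2 * d2 = (p1 * x2 + p2 * y2) - (p1 * x1 + p2 * y1)
    by rewrite /d1 /d2; ring.
  by rewrite hp1 hp2 subrr.
have hd : (d1 != 0) || (d2 != 0).
  rewrite -negb_and; apply/negP => /andP [/eqP h1 /eqP h2]; apply: hP12.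
  congr pair; apply/eqP; rewrite -subr_eq0 -oppr_eq0 opprB; apply/eqP; done.
set D := d1 ^+ 2 / ac ^+ 2 + d2 ^+ 2 / bc ^+ 2.
have hD : D != 0.
  have h1 : 0 <= d1 ^+ 2 / ac ^+ 2 by rewrite divr_ge0 // sqr_ge0.
  have h2 : 0 <= d2 ^+ 2 / bc ^+ 2 by rewrite divr_ge0 // sqr_ge0.
  case/orP: hd => hd.
  - have : 0 < d1 ^+ 2 / ac ^+ 2 by apply: divr_gt0; [rewrite exprn_even_gt0 //= hd | exact: exprn_gt0].
    rewrite /D => ?; rewrite gt_eqF //; lra.
  - have : 0 < d2 ^+ 2 / bc ^+ 2 by apply: divr_gt0; [rewrite exprn_even_gt0 //= hd | exact: exprn_gt0].
    rewrite /D => ?; rewrite gt_eqF //; lra.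
set B := q1 * d1 / ac ^+ 2 + q2 * d2 / bc ^+ 2.
set ts := - (2 * B) / D.
have htsD : ts * D = - (2 * B) by rewrite /ts; field.
have hB : B = 0.
  have hX := huniq (q1 + ts * d1, q2 + ts * d2).
  have [t0 ht0] := hQl; case: ht0 => eq1 eq2.
  have hXe : on_ellipse ac bc (q1 + ts * d1, q2 + ts * d2).
    rewrite /on_ellipse /=.
    have -> : (q1 + ts * d1) ^+ 2 / ac ^+ 2 + (q2 + ts * d2) ^+ 2 / bc ^+ 2
      = (q1 ^+ 2 / ac ^+ 2 + q2 ^+ 2 / bc ^+ 2) + ts * (2 * B + ts * D)
      by rewrite /B /D; ring.
    by rewrite hQc htsD subrr mulr0 addr0.
  have hXl : on_line (x1, y1) (x2, y2) (q1 + ts * d1, q2 + ts * d2).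
    exists (t0 + ts); rewrite eq1 eq2 /d1 /d2; congr pair => /=; ring.
  case: (hX hXe hXl).
  move=> e1 e2.
  have f1 : ts * d1 = 0 by apply: (addrI q1); rewrite addr0.
  have f2 : ts * d2 = 0 by apply: (addrI q2); rewrite addr0.
  have ts0 : ts = 0 by apply: (zero_of2 hd f1 f2).
  have : - (2 * B) = 0 by rewrite -htsD ts0 mul0r.
  move/eqP; rewrite oppr_eq0 mulf_eq0 pnatr_eq0 /= => /eqP //.
have hS0 : (p1 != 0) || (p2 != 0).
  rewrite -negb_and; apply/negP => /andP [/eqP h1 /eqP h2].
  by move: hp1; rewrite h1 h2 !mul0r addr0 => /eqP; rewrite eq_sym oner_eq0.
set w1 := q1 / ac ^+ 2 - p1; set w2 := q2 / bc ^+ 2 - p2.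
have hwd : w1 * d1 + w2 * d2 = 0.
  have -> : w1 * d1 + w2 * d2 = B - (p1 * d1 + p2 * d2) by rewrite /w1 /w2 /B; ring.
  by rewrite hB hpd subrr.
have hwq : w1 * q1 + w2 * q2 = 0.
  have -> : w1 * q1 + w2 * q2 = (q1 ^+ 2 / ac ^+ 2 + q2 ^+ 2 / bc ^+ 2) - (p1 * q1 + p2 * q2)
    by rewrite /w1 /w2; ring.
  by rewrite hQc hpQ subrr.
set det := d1 * q2 - d2 * q1.
have hdet : (det != 0) || (det != 0).
  rewrite orbb; apply/negP => /eqP h0.
  have e1 : d1 = q1 * (p1 * d1 + p2 * d2) + p2 * det.
    by rewrite -[LHS]mulr1 -hpQ /det; ring.
  have e2 : d2 = q2 * (p1 * d1 + p2 * d2) - p1 * det.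
    by rewrite -[LHS]mulr1 -hpQ /det; ring.
  have z1 : d1 = 0 by rewrite e1 hpd h0 !mulr0 addr0.
  have z2 : d2 = 0 by rewrite e2 hpd h0 !mulr0 subrr.
  by move: hd; rewrite z1 z2 eqxx.
have hw1 : w1 = 0.
  apply: (zero_of2 hdet).
  - have -> : w1 * det = q2 * (w1 * d1 + w2 * d2) - d2 * (w1 * q1 + w2 * q2)
      by rewrite /det; ring.
    by rewrite hwd hwq !mulr0 subrr.
  - have -> : w1 * det = q2 * (w1 * d1 + w2 * d2) - d2 * (w1 * q1 + w2 * q2)
      by rewrite /det; ring.
    by rewrite hwd hwq !mulr0 subrr.
have hw2 : w2 = 0.
  apply: (zero_of2 hdet).
  - have -> : w2 * det = d1 * (w1 * q1 + w2 * q2) - q1 * (w1 * d1 + w2 * d2)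
      by rewrite /det; ring.
    by rewrite hwd hwq !mulr0 subrr.
  - have -> : w2 * det = d1 * (w1 * q1 + w2 * q2) - q1 * (w1 * d1 + w2 * d2)
      by rewrite /det; ring.
    by rewrite hwd hwq !mulr0 subrr.
have hq1 : q1 = p1 * ac ^+ 2.
  by move/eqP: hw1; rewrite subr_eq0 => /eqP <-; rewrite divfK.
have hq2 : q2 = p2 * bc ^+ 2.
  by move/eqP: hw2; rewrite subr_eq0 => /eqP <-; rewrite divfK.
have hr1 : r1 = p1 * ae ^+ 2 by rewrite /p1 divfK.
have hr2 : r2 = p2 * be ^+ 2 by rewrite /p2 divfK.
have hK : p1 * (p1 * ac ^+ 2) + p2 * (p2 * bc ^+ 2) = 1 by rewrite -hq1 -hq2.
clear hw1 hw2 hdet hwd hwq hB htsD.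
clearbody p1 p2.
split; last split.
- move=> [n1 n2] []; rewrite /dot /vsub /= -/d1 -/d2 => hnn hnd.
  set c := n1 * p2 - n2 * p1.
  have hc : c = 0.
    apply: (zero_of2 hd).
    + have -> : c * d1 = p2 * (n1 * d1 + n2 * d2) - n2 * (p1 * d1 + p2 * d2)
        by rewrite /c; ring.
      by rewrite hnd hpd !mulr0 subrr.
    + have -> : c * d2 = n1 * (p1 * d1 + p2 * d2) - p1 * (n1 * d1 + n2 * d2)
        by rewrite /c; ring.
      by rewrite hnd hpd !mulr0 subrr.
  set S := p1 ^+ 2 + p2 ^+ 2.
  have hS : S != 0.
    apply/negP => /eqP h0.
    have := h0; move/eqP; rewrite paddr_eq0 ?sqr_ge0 // !sqrf_eq0 => /andP [a1 a2].
    by move: hS0; rewrite a1 a2.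
  set m := (n1 * p1 + n2 * p2) / S.
  have hn1 : n1 = m * p1.
    have h : n1 * S = (n1 * p1 + n2 * p2) * p1 + c * p2 by rewrite /c /S; ring.
    rewrite hc mul0r addr0 in h.
    by rewrite /m mulrAC -h mulfK.
  have hn2 : n2 = m * p2.
    have h : n2 * S = (n1 * p1 + n2 * p2) * p2 - c * p1 by rewrite /c /S; ring.
    rewrite hc mul0r subr0 in h.
    by rewrite /m mulrAC -h mulfK.
  have hmS : m * m * S = 1.
    by rewrite -hnn hn1 hn2 /S; ring.
  have hSdef : S = p1 ^+ 2 + p2 ^+ 2 by [].
  clearbody m c S.
  rewrite hn1 hn2 hr1 hr2 hae hbe.
  have -> : (m * p1 * (0 - x1) + m * p2 * (0 - y1)) *
      (m * p1 * (p1 * (ac ^+ 2 + ke) - x1) + m * p2 * (p2 * (bc ^+ 2 + ke) - y1))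
    = - (m * m * (p1 ^+ 2 + p2 ^+ 2)) * ke * (p1 * x1 + p2 * y1)
      + m * m * (p1 * x1 + p2 * y1) *
        ((p1 * x1 + p2 * y1) - (p1 * (p1 * ac ^+ 2) + p2 * (p2 * bc ^+ 2)))
    by ring.
  rewrite -hSdef hmS hp1 hK subrr mulr0 addr0 mulr1 mulN1r; done.
- case=> e1 e2.
  have a1 : p1 * ke = r1 - q1 by rewrite hr1 hq1 hae; ring.
  have a2 : p2 * ke = r2 - q2 by rewrite hr2 hq2 hbe; ring.
  rewrite e1 subrr in a1; rewrite e2 subrr in a2.
  move: a1 a2 => /eqP; rewrite mulf_eq0 (gt_eqF hke) orbF => /eqP a1 /eqP.
  rewrite mulf_eq0 (gt_eqF hke) orbF => /eqP a2.
  by move: hS0; rewrite a1 a2 eqxx.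
- rewrite /dot /vsub /= -/d1 -/d2 hr1 hr2 hq1 hq2 hae hbe.
  have -> : d1 * (p1 * (ac ^+ 2 + ke) - p1 * ac ^+ 2) + d2 * (p2 * (bc ^+ 2 + ke) - p2 * bc ^+ 2)
    = ke * (p1 * d1 + p2 * d2) by ring.
  by rewrite hpd mulr0.
Qed.
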